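(* Let $K=\mathbb{Q}(\rho)$ be a simplest cubic field, where $\rho$ is a root of $x^3-ax^2-(a+3)x-1$ with $a\in\mathbb{Z}_{\geq-1}$, and let $\Delta=a^2+3a+9$. (1) If $p>3$ is a prime with $p^2\mid\Delta$, then there are integers $1\leq k,l\leq p-1$ with $\frac{k+l\rho+\rho^2}{p}\in\mathcal{O}_K$ and $2k-l\equiv -2\pmod p$. (2) In particular, if $p>3$ is prime and $K$ has integral basis $\{1,\rho,\frac{k+l\rho+\rho^2}{p}\}$ with $1\leq k,l\leq p-1$, then $2k-l\equiv-2\pmod p$. *)

(* Defs.v *)
From HB Require Import structures.
From mathcomp Require Import all_boot all_order all_algebra all_field.
Set Implicit Arguments. Unset Strict Implicit. Unset Printing Implicit Defensive.
Import Order.TTheory GRing.Theory Num.Theory.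
Local Open Scope ring_scope.

Definition simplest_cubic (a : int) : {poly algC} :=
  'X^3 - (a%:~R) *: 'X^2 - ((a + 3)%:~R) *: 'X - 1.

Definition Delta (a : int) : int := a ^+ 2 + 3 * a + 9.

(* x lies in the field K = Q(rho) (rho is a root of an irreducible cubic,
   so Q(rho) = Q + Q rho + Q rho^2). *)
Definition in_Qrho (rho x : algC) : Prop :=
  exists c0 c1 c2 : rat, x = ratr c0 + ratr c1 * rho + ratr c2 * rho ^+ 2.

Definition in_OK (rho x : algC) : Prop := in_Qrho rho x /\ x \in Aint.

Definition integral_basis (rho b0 b1 b2 : algC) : Prop :=
  [/\ in_OK rho b0, in_OK rho b1, in_OK rho b2 &
   forall x, in_OK rho x ->
     exists m : int * int * int,
       x = m.1.1%:~R * b0 + m.1.2%:~R * b1 + m.2%:~R * b2 /\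
       forall m' : int * int * int,
         x = m'.1.1%:~R * b0 + m'.1.2%:~R * b1 + m'.2%:~R * b2 -> m' = m].

(* Main.v *)
Require Import Defs.
From HB Require Import structures.
From mathcomp Require Import all_boot all_order all_algebra all_field.
From mathcomp Require Import ring lra zify.
Import Order.TTheory GRing.Theory Num.Theory.
Local Open Scope ring_scope.

Lemma rootE (a : int) (rho : algC) : root (simplest_cubic a) rho ->
  rho ^+ 3 - a%:~R * rho ^+ 2 - (a + 3)%:~R * rho - 1 = 0.
Proof. by rewrite /root /simplest_cubic !hornerE => /eqP. Qed.

Lemma by_f (L R F c : algC) : L - R = F * c -> F = 0 -> L = R.
Proof. by move=> E F0; apply/eqP; rewrite -subr_eq0 E F0 mul0r. Qed.

Lemma in_Qrho_int (rho : algC) (A B C : int) (d : nat) :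
  in_Qrho rho ((A%:~R + B%:~R * rho + C%:~R * rho ^+ 2) / d%:R).
Proof.
exists (A%:~R / d%:R), (B%:~R / d%:R), (C%:~R / d%:R).
rewrite !fmorph_div /= !ratr_int ratr_nat.
by rewrite !mulrDl mulrAC [_ / _ * rho ^+ 2]mulrAC.
Qed.

Section P2.
Variables (rho : algC) (p : nat) (k l : int).
Hypothesis pgt0 : (0 < p)%N.
Let w := (k%:~R + l%:~R * rho + rho ^+ 2) / p%:R.
Hypothesis ib : integral_basis rho 1 rho w.

Lemma pnz : p%:R != 0 :> algC.
Proof. by rewrite pnatr_eq0 -lt0n. Qed.

Lemma indep (c0 c1 c2 : int) : c0%:~R + c1%:~R * rho + c2%:~R * rho ^+ 2 = 0 ->
  [/\ c0 = 0, c1 = 0 & c2 = 0].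
Proof.
move=> E.
case: ib => _ _ _ /(_ 0) [].
  by split; [exists 0, 0, 0; rewrite !rmorph0 !mul0r !addr0 | exact: Aint0].
move=> m [_ U].
have U0 := U (0, 0, 0).
have U1 := U (c0 - c2 * k, c1 - c2 * l, c2 * p%:Z).
rewrite /= !mul0r !addr0 in U0; have {}U0 := U0 erefl.
have {U}U1 : (c0 - c2 * k, c1 - c2 * l, c2 * p%:Z) = m.
  apply: U1 => /=; rewrite -E /w.
  have := pnz; move=> pn; field.
  done.
move: U1; rewrite -U0 => [[]].
have pz : p%:Z != 0 by rewrite -lt0n.
move=> h0 h1 /eqP; rewrite mulf_eq0 (negbTE pz) orbF => /eqP c2z.
move: h0 h1; rewrite c2z !mul0r !subr0 => -> ->; done.
Qed.

Lemma rep (A B C : int) (d : nat) : (0 < d)%N ->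
  (A%:~R + B%:~R * rho + C%:~R * rho ^+ 2) / d%:R \in Aint ->
  exists m0 m1 m2 : int,
   [/\ p%:Z * C = d%:Z * m2, p%:Z * B = d%:Z * p%:Z * m1 + d%:Z * m2 * l &
       p%:Z * A = d%:Z * p%:Z * m0 + d%:Z * m2 * k].
Proof.
move=> dgt0 HA.
case: ib => _ _ _ /(_ _ (conj (in_Qrho_int rho A B C d) HA)) [[[m0 m1] m2] [/= E _]].
exists m0, m1, m2.
have dn : d%:R != 0 :> algC by rewrite pnatr_eq0 -lt0n.
have pn := pnz.
have := indep (p%:Z * A - (d%:Z * p%:Z * m0 + d%:Z * m2 * k))
  (p%:Z * B - (d%:Z * p%:Z * m1 + d%:Z * m2 * l)) (p%:Z * C - d%:Z * m2).
case.
  apply: (@by_f _ _ ((A%:~R + B%:~R * rho + C%:~R * rho ^+ 2) / d%:R -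
     (m0%:~R * 1 + m1%:~R * rho + m2%:~R * w)) ((d * p)%:R)).
    rewrite /w; field. by rewrite dn pn.
  by rewrite E subrr.
by move=> /eqP; rewrite subr_eq0 => /eqP -> /eqP; rewrite subr_eq0 => /eqP -> /eqP; rewrite subr_eq0 => /eqP ->.
Qed.
End P2.

Lemma prime_dvd_sq (p : nat) (x : int) : prime p -> (p%:Z %| x * x)%Z -> (p%:Z %| x)%Z.
Proof.
move=> pp; rewrite !dvdzE abszM /= Euclid_dvdM //; by case/orP.
Qed.

Lemma part2 (a : int) (rho : algC) (p : nat) (k l : int) : root (simplest_cubic a) rho ->
  prime p ->
  integral_basis rho 1 rho ((k%:~R + l%:~R * rho + rho ^+ 2) / p%:R) ->
  (2 * k - l = - 2 %[mod p%:Z])%Z.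
Proof.
move=> /rootE F pp ib.
have pgt0 : (0 < p)%N by apply: prime_gt0.
have pn : p%:R != 0 :> algC by rewrite pnatr_eq0 -lt0n.
have pz : p%:Z != 0 by rewrite -lt0n.
set w := (_ / _) in ib.
have [_ [_ hr] [_ hw] _] := ib.
have E1 : rho * w = ((1%:~R + (k+a+3)%:~R * rho + (l+a)%:~R * rho^+2) / p%:R).
  apply: (@by_f _ _ _ (p%:R^-1) _ F); rewrite /w; field; done.
have E2 : w * w = (((a + 2 * l + k * k)%:~R + (a^+2 + 3 * a + 1 + 2 * l * (a+3) + 2 * k * l)%:~R * rho
     + (a^+2 + a + 3 + 2 * l * a + l^+2 + 2 * k)%:~R * rho^+2) / (p^2)%:R).
  apply: (@by_f _ _ _ ((rho + a%:~R + 2 * l%:~R) / (p%:R)^+2) _ F); rewrite /w natrX; field; done.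
have [m0 [m1 [m2 [hC hB hA]]]] := @rep rho p k l pgt0 ib _ _ _ _ pgt0 (eq_ind _ (fun z => z \in Aint) (rpredM hr hw) _ E1).
have [n0 [n1 [n2 [hC2 _ _]]]] := @rep rho p k l pgt0 ib _ _ _ (p ^ 2)%N (ltac:(by rewrite expn_gt0 pgt0)) (eq_ind _ (fun z => z \in Aint) (rpredM hw hw) _ E2).
have {}hC : l + a = m2 by apply: (mulfI pz).
have {}hB : k + a + 3 = p%:Z * m1 + m2 * l by apply: (mulfI pz); rewrite hB; ring.
have {}hA : 1 = p%:Z * m0 + m2 * k by apply: (mulfI pz); rewrite hA; ring.
have {}hC2 : a^+2 + a + 3 + 2 * l * a + l^+2 + 2 * k = p%:Z * n2.
  by apply: (mulfI pz); rewrite hC2 PoszM; ring.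
set u := l + a.
have key : (u^+2 + u + 1) * (u^+2 + u + 1) =
   p%:Z * ((2 * u+1) * m0 + (2 * u+1) * u * m1 + u * (u+1) * (n2 - 2 * m1)).
  have eA : p%:Z * m1 = k + a + 3 - u * l by rewrite hB /u hC; ring.
  have eB : p%:Z * m0 = 1 - u * k by rewrite /u hC hA; ring.
  transitivity ((2*u+1) * (p%:Z * m0) + (2*u+1)*u*(p%:Z * m1) + u*(u+1)*(p%:Z * n2 - 2 * (p%:Z * m1))).
    rewrite eA eB -hC2 /u; ring.
  ring.
have := @prime_dvd_sq p _ pp (introT dvdzP (ex_intro _ _ (etrans key (mulrC _ _)))).
move=> /dvdzP [q hq].
apply/eqP; rewrite eqz_mod_dvd; apply/dvdzP; exists (n2 - q).
rewrite mulrBl -hq [n2 * _]mulrC -hC2 /u; ring.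
Qed.

Lemma cubic_Aint (x : algC) (b2 b1 b0 : int) :
  x ^+ 3 + b2%:~R * x ^+ 2 + b1%:~R * x + b0%:~R = 0 -> x \in Aint.
Proof.
move=> E.
pose P : {poly algC} := Poly [:: b0%:~R; b1%:~R; b2%:~R; 1].
have PE : polyseq P = [:: b0%:~R; b1%:~R; b2%:~R; 1] by rewrite (@PolyK _ 0) //= oner_eq0.
apply: (@root_monic_Aint P).
- rewrite /root /horner PE /=; apply/eqP; rewrite -[RHS]E; ring.
- by rewrite monicE /lead_coef PE.
- apply/polyOverP => i; rewrite -/(nth 0 (polyseq P) i) PE.
  by case: i => [|[|[|[|i]]]] /=; rewrite ?intr_int ?rpred1 ?nth_nil ?rpred0.
Qed.

Lemma PoszX2 (p : nat) : Posz (p ^ 2)%N = (Posz p) ^+ 2.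
Proof. by rewrite -!natz natrX. Qed.

Lemma cancelz (n c : nat) (x : int) : coprime n c -> (n%:Z %| c%:Z * x)%Z -> (n%:Z %| x)%Z.
Proof. by move=> co; rewrite Gauss_dvdzr // coprimezE. Qed.

Lemma part1 (a : int) (rho : algC) (p : nat) : root (simplest_cubic a) rho ->
  prime p -> (3 < p)%N -> ((p ^ 2)%:Z %| Delta a)%Z ->
     exists k l : int,
       [/\ (1 <= k <= p%:Z - 1)%R, (1 <= l <= p%:Z - 1)%R,
           in_OK rho ((k%:~R + l%:~R * rho + rho ^+ 2) / p%:R) &
           (2 * k - l = - 2 %[mod p%:Z])%Z].
Proof.
move=> /rootE F pp p3 /dvdzP [D hD].
have pgt0 : (0 < p)%N by apply: prime_gt0.
have pn : p%:R != 0 :> algC by rewrite pnatr_eq0 -lt0n.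
have pz : p%:Z != 0 by rewrite -lt0n.
have ncop : forall c : nat, (0 < c)%N -> (c <= 3)%N -> coprime p c.
  move=> c c0 c3; rewrite prime_coprime //; apply/negP => /dvdn_leq h.
  have := h c0; lia.
have cop3 := ncop 3%N erefl erefl.
have cop2 := ncop 2%N erefl erefl.
have cop1 := ncop 1%N erefl erefl.
have p3nd : ~~ (3 %| p)%N.
  apply/negP => /(primeP pp).2 /orP [] /eqP h; lia.
have [t [s hts]] : exists t s : int, 3 * t - 1 = s * p%:Z.
  have hp := divn_eq p 3.
  have : (p %% 3 = 1)%N \/ (p %% 3 = 2)%N.
    move: p3nd; rewrite /dvdn; lia.
  case=> hm.
    exists (- (p %/ 3)%N%:Z), (-1); rewrite {2}hp hm; lia.
  exists ((p %/ 3)%N%:Z + 1), 1; rewrite {2}hp hm; lia.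
pose r := a * t. pose m := a * s.
have hr : 3 * r - a = m * p%:Z by rewrite /r /m -[RHS]mulrA -hts; ring.
have hD2 : a ^+ 2 + 3 * a + 9 = D * p%:Z ^+ 2 by rewrite -PoszX2 -hD.
have [e0 he0] : exists e0 : int, r ^+ 3 - a * r ^+ 2 - (a + 3) * r - 1 = p%:Z ^+ 2 * e0.
  have : ((p ^ 2)%N%:Z %| 27%N%:Z * (r ^+ 3 - a * r ^+ 2 - (a + 3) * r - 1))%Z.
    apply/dvdzP; exists (-(2 * a+3) * D - 3 * m * p%:Z * D + m^+3 * p%:Z).
    have e3 : 3 * r = a + m * p%:Z by rewrite -hr; ring.
    transitivity ((3 * r)^+3 - 3 * a * (3 * r)^+2 - 9 * (a+3) * (3 * r) - 27); first ring.
    rewrite e3 PoszX2.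
    transitivity (-(2 * a+3) * (a^+2+3 * a+9) - 3 * m * p%:Z * (a^+2+3 * a+9) + m^+3 * p%:Z^+3); first ring.
    rewrite hD2; ring.
  move/(@cancelz _ _ _ (coprimeXl 2 (coprimeXr 3 cop3)))/dvdzP => [e0 he0].
  by exists e0; rewrite he0 PoszX2 mulrC.
have [e1 he1] : exists e1 : int, 3 * r ^+ 2 - 2 * a * r - (a + 3) = p%:Z ^+ 2 * e1.
  have : ((p ^ 2)%N%:Z %| 3%N%:Z * (3 * r ^+ 2 - 2 * a * r - (a + 3)))%Z.
    apply/dvdzP; exists (m^+2 - D).
    have e3 : 3 * r = a + m * p%:Z by rewrite -hr; ring.
    transitivity ((3 * r)^+2 - 2 * a * (3 * r) - 3 * a - 9); first ring.
    rewrite e3 PoszX2.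
    transitivity (-(a^+2+3 * a+9) + m^+2 * p%:Z^+2); first ring.
    rewrite hD2; ring.
  move/(@cancelz _ _ _ (coprimeXl 2 cop3))/dvdzP => [e1 he1].
  by exists e1; rewrite he1 PoszX2 mulrC.
pose sg := rho - r%:~R.
have hg : sg ^+ 3 + (m * p%:Z)%:~R * sg ^+ 2 + (p%:Z ^+ 2 * e1)%:~R * sg + (p%:Z ^+ 2 * e0)%:~R = 0.
  rewrite -he0 -he1 -hr -[RHS]F /sg; ring.
pose th := sg ^+ 2 / p%:R.
have hth : th ^+ 3 + (2 * p%:Z * e1 - m ^+ 2 * p%:Z)%:~R * th ^+ 2
    + (p%:Z ^+ 2 * e1 ^+ 2 - 2 * p%:Z * e0 * m)%:~R * th + (- (p%:Z * e0 ^+ 2))%:~R = 0.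
  apply: (@by_f _ _ _ ((sg ^+ 3 + (p%:Z ^+ 2 * e1)%:~R * sg - (m * p%:Z)%:~R * sg ^+ 2 - (p%:Z ^+ 2 * e0)%:~R) / p%:R ^+ 3) _ hg).
  rewrite /th; field; done.
have thA : th \in Aint := @cubic_Aint _ _ _ _ hth.
have rhoA : rho \in Aint.
  apply: (@cubic_Aint rho (- a) (- (a + 3)) (-1)); rewrite -[RHS]F; ring.
have rnd : ~ (p%:Z %| r)%Z.
  move=> /dvdzP [x hx].
  have : (p%:Z %| 3%N%:Z * (3%N%:Z * 1))%Z.
    apply/dvdzP; exists (D * p%:Z - (3 * x - m) * (3 * x - m) * p%:Z - 3 * (3 * x - m)).
    have ea : a = (3 * x - m) * p%:Z by rewrite mulrBl -mulrA -hx -hr; ring.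
    transitivity (a ^+ 2 + 3 * a + 9 - a * (a + 3)); first ring.
    rewrite hD2 ea; ring.
  move/(@cancelz _ _ _ cop3)/(@cancelz _ _ _ cop3).
  rewrite dvdz1 /=; lia.
pose k := (r ^+ 2 %% p%:Z)%Z. pose l := ((- 2 * r) %% p%:Z)%Z.
have hk : k = r ^+ 2 - (r ^+ 2 %/ p%:Z)%Z * p%:Z by rewrite /k {2}(divz_eq (r ^+ 2) p%:Z); ring.
have hl : l = - 2 * r - ((- 2 * r) %/ p%:Z)%Z * p%:Z by rewrite /l {2}(divz_eq (- 2 * r) p%:Z); ring.
have kb : (1 <= k <= p%:Z - 1).
  have k0 : 0 <= k by apply: modz_ge0.
  have kp : k < p%:Z by have := ltz_mod (r ^+ 2) pz.
  have kn : k != 0.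
    apply/eqP => /dvdz_mod0P; rewrite expr2 => /(@prime_dvd_sq p _ pp); exact: rnd.
  apply/andP; split; lia.
have lb : (1 <= l <= p%:Z - 1).
  have k0 : 0 <= l by apply: modz_ge0.
  have kp : l < p%:Z by have := ltz_mod (- 2 * r) pz.
  have kn : l != 0.
    apply/eqP => /dvdz_mod0P/dvdzP [x hx]; apply: rnd.
    apply: (@cancelz _ 2 _ cop2); apply/dvdzP; exists (- x); rewrite mulNr -hx; ring.
  apply/andP; split; lia.
exists k, l; split => //.
  split; first by have := in_Qrho_int rho k l 1 p; rewrite rmorph1 mul1r.
  have -> : (k%:~R + l%:~R * rho + rho ^+ 2) / p%:R =
     th - ((r ^+ 2 %/ p%:Z)%Z)%:~R - (((- 2 * r) %/ p%:Z)%Z)%:~R * rho.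
    rewrite hk hl /th /sg; field; done.
  apply: rpredB; [apply: rpredB; [exact: thA | exact: Aint_int] | apply: rpredM; [exact: Aint_int | exact: rhoA]].
apply/eqP; rewrite eqz_mod_dvd.
have : (p%:Z %| 3%N%:Z * (3%N%:Z * (r ^+ 2 + r + 1)))%Z.
  apply/dvdzP; exists (D * p%:Z + 2 * a * m + m ^+ 2 * p%:Z + 3 * m).
  have e3 : 3 * r = a + m * p%:Z by rewrite -hr; ring.
  transitivity ((3 * r) ^+ 2 + 3 * (3 * r) + 9); first ring.
  rewrite e3.
  transitivity ((a ^+ 2 + 3 * a + 9) + 2 * a * m * p%:Z + m ^+ 2 * p%:Z ^+ 2 + 3 * m * p%:Z); first ring.
  rewrite hD2; ring.
move/(@cancelz _ _ _ cop3)/(@cancelz _ _ _ cop3)/dvdzP => [y hy].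
apply/dvdzP; exists (2 * y - 2 * (r ^+ 2 %/ p%:Z)%Z + ((- 2 * r) %/ p%:Z)%Z).
rewrite {1}hk {1}hl.
transitivity (2 * (y * p%:Z) - 2 * (r ^+ 2 %/ p%:Z)%Z * p%:Z + ((- 2 * r) %/ p%:Z)%Z * p%:Z); last ring.
rewrite -hy; ring.
Qed.

Theorem corollary4p3 (a : int) (rho : algC) :
  (-1 <= a)%R -> root (simplest_cubic a) rho ->
  (* (1) *)
  (forall p : nat, prime p -> (3 < p)%N -> ((p ^ 2)%:Z %| Delta a)%Z ->
     exists k l : int,
       [/\ (1 <= k <= p%:Z - 1)%R, (1 <= l <= p%:Z - 1)%R,
           in_OK rho ((k%:~R + l%:~R * rho + rho ^+ 2) / p%:R) &
           (2 * k - l = - 2 %[mod p%:Z])%Z]) /\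
  (* (2) *)
  (forall (p : nat) (k l : int), prime p -> (3 < p)%N ->
     (1 <= k <= p%:Z - 1)%R -> (1 <= l <= p%:Z - 1)%R ->
     integral_basis rho 1 rho ((k%:~R + l%:~R * rho + rho ^+ 2) / p%:R) ->
     (2 * k - l = - 2 %[mod p%:Z])%Z).
Proof.
move=> _ hrho; split.
  by move=> p pp p3 hd; exact: (@part1 a rho p hrho pp p3 hd).
by move=> p k l pp _ _ _ ib; exact: (@part2 a rho p k l hrho pp ib).
Qed.
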